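(* For $n\ge2$, let $\sim$ be the equivalence relation on $B_n$ defined by $t\sim t'$ if and only if for every $p\in\{x_1,\dots,x_n\}$, $d_{G(t)}(p)=1\iff d_{G(t')}(p)=1$. Then $|B_n/{\sim}|=2^{n-2}$.
   Context: $B_n$ is the set of bracketings of size $n$: binary terms in which $x_1,\dots,x_n$ each occur exactly once, in this order. For $t\in B_n$, the rooted tree $G(t)$ is defined recursively: $G(x_i)$ is the single vertex $x_i$; $G(t_1t_2)$ is $G(t_1)\cup G(t_2)$ plus an edge from the leftmost variable of $t_1$ to the leftmost variable of $t_2$; it is rooted at $x_1$. $d_T(p)$ denotes the depth (distance from the root) of $p$ in $T$. *)

(* Defs.v *)
From mathcomp Require Import all_boot.
Set Implicit Arguments. Unset Strict Implicit. Unset Printing Implicit Defensive.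

(* A bracketing: a binary term whose leaves are the variables x_1,...,x_n,
   each occurring once, in this order.  Since the order of the variables is
   fixed, a bracketing is determined by its shape: a binary tree whose leaves
   are read left to right as x_1, ..., x_n. *)
Inductive bracketing : Type :=
| Var : bracketing
| App : bracketing -> bracketing -> bracketing.

Fixpoint bsize (t : bracketing) : nat :=
  match t with
  | Var => 1
  | App t1 t2 => bsize t1 + bsize t2
  end.

Definition in_B (n : nat) (t : bracketing) : Prop := bsize t = n.

(* Variables are encoded by 0-based indices: x_(i+1) is index i.
   [edges t off] is the edge list of G(t) when the leftmost variable of t
   has index off.  An edge is a pair (a, b) linking the leftmost variable a
   of t1 to the leftmost variable b of t2. *)
Fixpoint edges (t : bracketing) (off : nat) : seq (nat * nat) :=
  match t with
  | Var => [::]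
  | App t1 t2 =>
      (off, off + bsize t1) :: edges t1 off ++ edges t2 (off + bsize t1)
  end.

Definition adjG (t : bracketing) (a b : nat) : bool :=
  ((a, b) \in edges t 0) || ((b, a) \in edges t 0).

Definition rootG : nat := 0.

(* d_{G(t)}(p) = 1 : p is at distance exactly 1 from the root, i.e. p is
   not the root and there is a path of length 1 (an edge) from the root. *)
Definition depth_one (t : bracketing) (p : nat) : bool :=
  (p != rootG) && adjG t rootG p.

Definition equivB (n : nat) (t t' : bracketing) : Prop :=
  forall p : 'I_n, depth_one t p = depth_one t' p.

(* Main.v *)
Require Import Defs.
From Stdlib Require Import List.
From mathcomp Require Import all_boot.
From mathcomp Require Import zify.

Fixpoint spine (t : bracketing) : seq nat :=
  match t with Var => [::] | App l r => bsize l :: spine l end.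

Lemma bsize_gt0 t : 0 < bsize t.
Proof. elim: t => //= l IHl r IHr; lia. Qed.

Lemma edges_ge t off e : e \in edges t off -> off <= e.1 /\ off < e.2.
Proof.
case: e => a b; elim: t off => [|l IHl r IHr] off //=.
rewrite inE mem_cat => /orP [/eqP [-> ->] /=|/orP [/IHl //|/IHr]].
  by have := bsize_gt0 l; lia.
move=> /= [? ?]; have := bsize_gt0 l; lia.
Qed.

Lemma edges0 t p : ((0, p) \in edges t 0) = (p \in spine t).
Proof.
elim: t => [|l IHl r IHr] //=.
rewrite add0n inE mem_cat IHl inE.
have -> : ((0, p) \in edges r (bsize l)) = false.
  apply/negP => /edges_ge /= []; have := bsize_gt0 l; lia.
by rewrite orbF xpair_eqE eqxx.
Qed.

Lemma depth_oneE t p : depth_one t p = (p != 0) && (p \in spine t).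
Proof.
rewrite /depth_one /adjG /rootG edges0.
case: (p =P 0) => //= _.
have -> : ((p, 0) \in edges t 0) = false.
  by apply/negP => /edges_ge /= [].
by rewrite orbF.
Qed.

Lemma spine_bound t x : x \in spine t -> 0 < x < bsize t.
Proof.
elim: t => [|l IHl r IHr] //=; rewrite inE => /orP [/eqP ->|/IHl].
  by have := bsize_gt0 l; have := bsize_gt0 r; lia.
by have := bsize_gt0 r; lia.
Qed.

Lemma spine1 l r : 1 \in spine (App l r).
Proof.
elim: l r => [|l1 IH1 l2 IH2] r //=.
by rewrite inE (IH1 l2) orbT.
Qed.

Definition ext (b : bool) (t : bracketing) : bracketing :=
  if b then App t Var else
  match t with Var => Var | App l r => App l (App r Var) end.

Fixpoint g (bs : seq bool) : bracketing :=
  match bs with [::] => App Var Var | b :: bs' => ext b (g bs') end.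

Lemma g_app bs : exists l r, g bs = App l r.
Proof. case: bs => [|b bs] /=; first by exists Var, Var.
case: b; first by eexists; eexists.
elim: bs => [|c bs IH] /=; first by eexists; eexists.
case: c; first by eexists; eexists.
move: IH; case: (g bs) => [|l r] /=; first by case=> ? [].
case: r => [|r1 r2]; by eexists; eexists.
Qed.

Lemma g_size bs : bsize (g bs) = (size bs).+2.
Proof.
elim: bs => [|b bs IH] //=.
case: b => /=; first by rewrite IH addn1.
have [l [r E]] := g_app bs; move: IH; rewrite E /= => <-; lia.
Qed.

Fixpoint P (bs : seq bool) (p : nat) : bool :=
  match bs with [::] => p == 1 | b :: bs' => (b && (p == (size bs').+2)) || P bs' p end.

Lemma g_spine bs p : (p \in spine (g bs)) = P bs p.
Proof.
elim: bs => [|b bs IH] /=; first by rewrite inE.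
case: b => /=.
  by rewrite inE g_size IH.
have [l [r E]] := g_app bs; move: IH; rewrite E /= => <-.
by [].
Qed.

Lemma P_bound bs p : P bs p -> 0 < p < (size bs).+2.
Proof.
elim: bs => [|b bs IH] /=; first by move/eqP->.
case/orP => [/andP [_ /eqP ->]|/IH]; lia.
Qed.

Lemma P_distinct bs1 bs2 : size bs1 = size bs2 -> bs1 <> bs2 ->
  exists p, p < (size bs1).+2 /\ P bs1 p <> P bs2 p.
Proof.
elim: bs1 bs2 => [|b1 c1 IH] [|b2 c2] //= [Hs] Hne.
case: (eqVneq b1 b2) => [Eb|Nb].
  subst b2.
  have Hc : c1 <> c2 by move=> E; apply: Hne; rewrite E.
  have [p [Hp HP]] := IH c2 Hs Hc.
  exists p; split; first lia.
  rewrite -Hs; have -> : (p == (size c1).+2) = false by apply/negbTE/eqP; lia.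
  by rewrite andbF /=.
exists (size c1).+2; split; first lia.
have F1 : P c1 (size c1).+2 = false by apply/negP => /P_bound; lia.
have F2 : P c2 (size c1).+2 = false by rewrite Hs; apply/negP => /P_bound; lia.
rewrite F1 F2 -Hs eqxx !andbT !orbF.
by move=> E; move: Nb; rewrite E eqxx.
Qed.

Fixpoint Bits (t : bracketing) (k : nat) : seq bool :=
  match k with 0 => [::] | k'.+1 => ((k'.+2) \in spine t) :: Bits t k' end.

Lemma Bits_size t k : size (Bits t k) = k.
Proof. by elim: k => //= k ->. Qed.

Lemma P_Bits t k p : P (Bits t k) p = (p == 1) || ((2 <= p < k.+2) && (p \in spine t)).
Proof.
elim: k => [|k IH] /=.
  by case: p => [|[|p]].
rewrite IH Bits_size.
case: (eqVneq p k.+2) => [->|Hp].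
  rewrite andbT /=; case: (_ \in _) => /=; [by rewrite andbT ltnS leqnn | by rewrite !andbF].
rewrite andbF /=; congr (_ || _).
case: (p \in spine t); rewrite ?andbT ?andbF //; lia.
Qed.

Fixpoint allbits (k : nat) : seq (seq bool) :=
  match k with 0 => [:: [::]]
  | k'.+1 => map (cons true) (allbits k') ++ map (cons false) (allbits k') end.

Lemma allbits_size k : size (allbits k) = 2 ^ k.
Proof. elim: k => //= k IH; rewrite size_cat !size_map IH expnS; lia. Qed.

Lemma allbits_mem k bs : (bs \in allbits k) = (size bs == k).
Proof.
elim: k bs => [|k IH] [|b bs] //=.
rewrite mem_cat; apply/negbTE; apply/norP; split; apply/negP => /mapP [? _] //.
have Ht : injective (cons true) by move=> x y [].
have Hf : injective (cons false) by move=> x y [].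
rewrite mem_cat; case: b.
  rewrite (mem_map Ht) IH.
  have -> : (true :: bs \in map (cons false) (allbits k)) = false.
    by apply/negP => /mapP [? _].
  by rewrite orbF.
rewrite (mem_map Hf) IH.
have -> : (false :: bs \in map (cons true) (allbits k)) = false.
  by apply/negP => /mapP [? _].
by [].
Qed.

Lemma allbits_uniq k : uniq (allbits k).
Proof.
elim: k => //= k IH.
have Ht : injective (cons true) by move=> x y [].
have Hf : injective (cons false) by move=> x y [].
rewrite cat_uniq (map_inj_uniq Ht) (map_inj_uniq Hf) IH andbT /=.
apply/hasPn => x /mapP [y _ ->]; apply/negP => /mapP [z _] //.
Qed.

Lemma In_map_g (A : seq (seq bool)) t : In t (map g A) -> exists2 bs, bs \in A & t = g bs.
Proof.
elim: A => [|a A IH] //= [<-|/IH [bs H E]].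
  by exists a; rewrite ?inE ?eqxx.
by exists bs; rewrite ?inE ?H ?orbT.
Qed.

Lemma map_g_In (A : seq (seq bool)) bs : bs \in A -> In (g bs) (map g A).
Proof.
elim: A => [|a A IH] //=; rewrite inE => /orP [/eqP ->|/IH]; by [left|right].
Qed.

Theorem lemma8p5 (n : nat) (hn : 2 <= n) :
  exists reps : seq bracketing,
    [/\ forall t, In t reps -> in_B n t,
        forall i j, i < size reps -> j < size reps ->
          equivB n (nth Var reps i) (nth Var reps j) -> i = j,
        forall t, in_B n t -> exists2 r, In r reps & equivB n t r
      & size reps = 2 ^ (n - 2)].
Proof.
exists (map g (allbits (n - 2))); split.
- move=> t /In_map_g [bs]; rewrite allbits_mem /in_B => /eqP Hs ->.
  rewrite g_size Hs; lia.
- move=> i j; rewrite size_map => Hi Hj.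
  rewrite (nth_map [::]) // (nth_map [::]) // => Heq.
  have Si : size (nth [::] (allbits (n - 2)) i) = n - 2.
    by apply/eqP; rewrite -allbits_mem mem_nth.
  have Sj : size (nth [::] (allbits (n - 2)) j) = n - 2.
    by apply/eqP; rewrite -allbits_mem mem_nth.
  case: (eqVneq (nth [::] (allbits (n - 2)) i) (nth [::] (allbits (n - 2)) j)) => [E|Ne].
    by apply/eqP; rewrite -(nth_uniq [::] Hi Hj (allbits_uniq _)) E.
  have [p [Hp HP]] := P_distinct _ _ (etrans Si (esym Sj)) (elimN eqP Ne).
  exfalso; apply: HP.
  have Hpn : p < n by rewrite Si in Hp; lia.
  have := Heq (Ordinal Hpn); rewrite !depth_oneE /= !g_spine.
  case: (eqVneq p 0) => [->|_] //= .
  have F : forall bs, P bs 0 = false by move=> bs; apply/negP => /P_bound.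
  by rewrite !F.
- move=> t Ht; rewrite /in_B in Ht.
  exists (g (Bits t (n - 2))).
    by apply: map_g_In; rewrite allbits_mem Bits_size.
  move=> p; rewrite !depth_oneE g_spine P_Bits.
  case: (eqVneq (nat_of_ord p) 0) => [//|Hp0] /=.
  have Hp := ltn_ord p.
  case: t Ht => [|l r] Ht; first by simpl in Ht; lia.
  case: (eqVneq (nat_of_ord p) 1) => [->|Hp1]; first by rewrite spine1.
  rewrite /=; have -> : (2 <= p < (n - 2).+2) by lia.
  by [].
- by rewrite size_map allbits_size.
Qed.
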